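(* Let $m\ge n$ and let $K_1,\dots,K_m\subseteq\mathbb{R}^n$ be nontrivial (i.e. $\neq\{o\}$) pointed convex cones. If $\bigcap_{j\in J}K_j\neq\{o\}$ for every $J\subseteq\{1,\dots,m\}$ with $\operatorname{card}J=n$, and $\bigcup_{j\in J}K_j\neq\mathbb{R}^n$ for every $J\subseteq\{1,\dots,m\}$ with $\operatorname{card}J=n+1$, then $\bigcap_{i=1}^mK_i\neq\{o\}$ and $\bigcup_{i=1}^mK_i\neq\mathbb{R}^n$.
   Context: $n\ge2$; $o$ is the zero vector; a cone $K$ is pointed if $K\cap(-K)=\{o\}$. *)

(* Defs.v *)
From HB Require Import structures.
From mathcomp Require Import all_boot all_order all_algebra.
From mathcomp Require Import classical_sets reals.
Set Implicit Arguments. Unset Strict Implicit. Unset Printing Implicit Defensive.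
Import Order.TTheory GRing.Theory Num.Theory.
Local Open Scope ring_scope.
Local Open Scope classical_set_scope.

Section Cones.
Variables (R : realType) (n : nat).

Definition is_cone (K : set 'rV[R]_n) : Prop :=
  K !=set0 /\ forall (a : R) (x : 'rV[R]_n), 0 <= a -> K x -> K (a *: x).

Definition is_convex (K : set 'rV[R]_n) : Prop :=
  forall (x y : 'rV[R]_n) (t : R), K x -> K y -> 0 <= t -> t <= 1 ->
    K ((1 - t) *: x + t *: y).

Definition convex_cone (K : set 'rV[R]_n) : Prop := is_cone K /\ is_convex K.

Definition pointed (K : set 'rV[R]_n) : Prop :=
  K `&` [set x | K (- x)] = [set 0].

Definition nontrivial (K : set 'rV[R]_n) : Prop := K <> [set 0].

End Cones.

(* Main.v *)
Require Import Defs.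
From HB Require Import structures.
From mathcomp Require Import all_boot all_order all_algebra.
From mathcomp Require Import classical_sets reals boolp.
Import Order.TTheory GRing.Theory Num.Theory.
Local Open Scope ring_scope.
Local Open Scope classical_set_scope.

Lemma argmax_ex (R : realType) (p : nat) (f : 'I_p.+1 -> R) :
  exists j, forall i, f i <= f j.
Proof.
case: (@arg_maxP _ _ _ ord0 xpredT f) => // j _ Hj.
by exists j => i; apply: Hj.
Qed.

Lemma cone_basic (R : realType) (n : nat) (K : set 'rV[R]_n) :
  convex_cone K -> K 0 /\ (forall x y, K x -> K y -> K (x + y)).
Proof.
case=> [[[z Kz] Hs] Hc]; split.
  by have := Hs 0 z (lexx 0) Kz; rewrite scale0r.
move=> x y Kx Ky.
have h : 0 <= (2%:R : R)^-1 by rewrite invr_ge0.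
have h1 : (2%:R : R)^-1 <= 1 by rewrite invf_le1 // ler1n.
have := Hs 2%:R _ _ (Hc x y _ Kx Ky h h1); rewrite ler0n => /(_ isT).
suff -> : 2%:R *: ((1 - (2%:R)^-1) *: x + (2%:R)^-1 *: y) = x + y :> 'rV[R]_n by [].
have e : 1 - (2%:R : R)^-1 = (2%:R)^-1.
  by rewrite [X in X - _](splitr 1) mul1r addrK.
by rewrite e -scalerDr scalerA mulfV ?pnatr_eq0 // scale1r.
Qed.

Lemma cone_sum (R : realType) (n : nat) (K : set 'rV[R]_n) (I : finType)
  (P : pred I) (c : I -> R) (v : I -> 'rV[R]_n) :
  convex_cone K -> (forall i, P i -> 0 <= c i /\ K (v i)) ->
  K (\sum_(i | P i) c i *: v i).
Proof.
move=> cK H; have [K0 KD] := cone_basic _ _ _ cK.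
apply: (big_ind K) => // i /H [c0 Kv].
by case: cK => [[_ Hs] _]; apply: Hs.
Qed.

Lemma pointed0 (R : realType) (n : nat) (K : set 'rV[R]_n) x :
  pointed K -> K x -> K (- x) -> x = 0.
Proof.
move=> H Kx Kx'.
have := congr1 (fun S : set _ => S x) H => /= <-.
by split.
Qed.
Lemma dep_rel (F : fieldType) (p n : nat) (f : 'I_p -> 'rV[F]_n) :
  (n < p)%N -> exists c : 'I_p -> F, (exists i, c i != 0) /\ \sum_i c i *: f i = 0.
Proof.
move=> np.
pose A := \matrix_(i < p) f i.
have nf : ~~ row_free A.
  by rewrite -row_leq_rank -ltnNge (leq_ltn_trans (rank_leq_col A) np).
have : kermx A != 0 by rewrite kermx_eq0.
case/eqP/matrixP/boolp.existsNP => i /boolp.existsNP [j /eqP Hij].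
exists (fun k => kermx A i k); split.
  by exists j; apply/eqP; move: Hij; rewrite [X in _ != X]mxE => /eqP.
have := mulmx_sum_row (row i (kermx A)) A.
rewrite -row_mul mulmx_ker row0 => H.
transitivity (\sum_i0 row i (kermx A) 0 i0 *: row i0 A); last by rewrite -H.
apply: eq_bigr => k _; by rewrite !mxE rowK.
Qed.

Lemma radon_good (R : realType) (n m p : nat) (K : 'I_m -> set 'rV[R]_n)
  (hK : forall i, convex_cone (K i) /\ pointed (K i))
  (S : {set 'I_m}) (g : 'I_p -> 'I_m) (v : 'I_p -> 'rV[R]_n) (l : 'I_p -> R) :
  injective g -> (forall i, g i \in S) -> (forall i, v i != 0) ->
  (forall i j, j \in S -> j != g i -> K j (v i)) ->
  \sum_i l i *: v i = 0 -> (exists i, 0 < l i) -> (exists j, l j <= 0) ->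
  exists w, w != 0 /\ forall j, j \in S -> K j w.
Proof.
move=> ig HS Hnz Hin H0 [i0 li0] [j0 lj0].
set w := \sum_(i | 0 < l i) l i *: v i.
have wN : w = \sum_(i | ~~ (0 < l i)) (- l i) *: v i.
  move: H0; rewrite (bigID (fun i => 0 < l i)) /= => /eqP; rewrite addr_eq0 => /eqP; rewrite /w => ->.
  by rewrite -sumrN; apply: eq_bigr => i _; rewrite scaleNr.
exists w; split.
- apply/eqP => w0.
  have gi : forall i, 0 < l i -> g i != g j0.
    move=> i li; rewrite (inj_eq ig); apply/eqP => eij; move: li; rewrite eij.
    by rewrite ltNge lj0.
  have Hv : forall i, 0 < l i -> K (g j0) (v i).
    by move=> i li; apply: Hin => //; rewrite eq_sym; exact: gi.
  move: w0; rewrite /w (bigD1 i0) //= => /eqP; rewrite addr_eq0 => /eqP e.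
  have : v i0 = 0.
    apply: (pointed0 _ _ _ _ (proj2 (hK (g j0)))); first exact: Hv.
    have -> : - v i0 = (l i0)^-1 *: \sum_(i | (0 < l i) && (i != i0)) l i *: v i.
      rewrite -[X in _ = _ *: X]opprK -e scalerN scalerA mulVf ?scale1r //.
      by rewrite gt_eqF.
    rewrite scaler_sumr.
    have -> : \sum_(i | (0 < l i) && (i != i0)) (l i0)^-1 *: (l i *: v i) =
              \sum_(i | (0 < l i) && (i != i0)) ((l i0)^-1 * l i) *: v i.
      by apply: eq_bigr => i _; rewrite scalerA.
    apply: cone_sum; first exact: (proj1 (hK _)).
    move=> i /andP [li _]; split; last exact: Hv.
    by rewrite mulr_ge0 // ?invr_ge0 ltW.
  by move/eqP; rewrite (negbTE (Hnz i0)).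
- move=> j jS.
  case: (boolP [exists i, (g i == j) && (0 < l i)]).
  + case/existsP => i /andP [/eqP gij li].
    rewrite wN; apply: cone_sum; first exact: (proj1 (hK _)).
    move=> k Hk; split; first by rewrite oppr_ge0 leNgt.
    apply: Hin => //; apply/eqP => ejk.
    have eki : k = i by apply: ig; rewrite -ejk gij.
    by move: Hk; rewrite eki li.
  + move=> Hn; apply: cone_sum; first exact: (proj1 (hK _)).
    move=> k Hk; split; first exact: ltW.
    apply: Hin => //; apply/eqP => ejk.
    by move: Hn; apply/negP/negPn/existsP; exists k; rewrite -ejk eqxx Hk.
Qed.

From mathcomp Require Import lra.

Lemma pos_case (R : realType) (n m p : nat) (K : 'I_m -> set 'rV[R]_n)
  (hK : forall i, convex_cone (K i) /\ pointed (K i))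
  (g : 'I_p.+1 -> 'I_m) (v : 'I_p.+1 -> 'rV[R]_n) (l c : 'I_p.+1 -> R) x :
  (forall i k, k != i -> K (g i) (v k)) -> (forall i, 0 < l i) ->
  \sum_i l i *: v i = 0 -> x = \sum_i c i *: v i -> exists i, K (g i) x.
Proof.
move=> Hin Hl H0 Hx.
have [j Hj] := argmax_ex _ _ (fun i => - c i / l i).
set t := - c j / l j.
have ex : x = \sum_i (c i + t * l i) *: v i.
  rewrite Hx; transitivity (\sum_i c i *: v i + t *: \sum_i l i *: v i).
    by rewrite H0 scaler0 addr0.
  by rewrite scaler_sumr -big_split /=; apply: eq_bigr => i _; rewrite scalerDl scalerA.
exists j; rewrite ex (bigD1 j) //=.
have -> : c j + t * l j = 0.
  by rewrite /t divfK ?subrr // gt_eqF.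
rewrite scale0r add0r; apply: cone_sum; first exact: (proj1 (hK _)).
move=> i ij; split; last exact: Hin.
have := Hj i; rewrite /= -/t ler_pdivrMr // => h.
lra.
Qed.

Lemma rel_cases (R : realType) (n p : nat) (v : 'I_p -> 'rV[R]_n) (l : 'I_p -> R) :
  \sum_i l i *: v i = 0 -> (exists i, l i != 0) ->
  (exists l', \sum_i l' i *: v i = 0 /\ (exists i, 0 < l' i) /\ (exists j, l' j <= 0)) \/
  (exists l', \sum_i l' i *: v i = 0 /\ forall i, 0 < l' i).
Proof.
move=> H0 [i0 li0].
have H0' : \sum_i (- l i) *: v i = 0.
  by under eq_bigr do rewrite scaleNr; rewrite sumrN H0 oppr0.
case: (boolP [exists i, 0 < l i]) => [/existsP [i li] | /existsPn Hn].
  case: (boolP [forall i, 0 < l i]) => [/forallP Ha | /forallPn [j lj]].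
    by right; exists l.
  by left; exists l; split => //; split; [exists i | exists j; rewrite leNgt].
have li0n : l i0 < 0 by rewrite lt_neqAle li0 leNgt Hn.
case: (boolP [forall i, l i < 0]) => [/forallP Ha | /forallPn [j lj]].
  by right; exists (fun i => - l i); split => // i; rewrite oppr_gt0.
left; exists (fun i => - l i); split => //; split; first by exists i0; rewrite oppr_gt0.
by exists j; rewrite oppr_le0 leNgt.
Qed.

Lemma step (R : realType) (n m : nat) (K : 'I_m -> set 'rV[R]_n)
  (hK : forall i, convex_cone (K i) /\ pointed (K i))
  (S : {set 'I_m}) (g : 'I_n.+1 -> 'I_m) (v : 'I_n.+1 -> 'rV[R]_n) x :
  injective g -> (forall i, g i \in S) -> (forall i, v i != 0) ->
  (forall i j, j \in S -> j != g i -> K j (v i)) -> (forall i, ~ K (g i) x) ->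
  exists w, w != 0 /\ forall j, j \in S -> K j w.
Proof.
move=> ig HS Hnz Hin Hx.
have Kin : forall i k, k != i -> K (g i) (v k).
  by move=> i k ki; apply: Hin => //; rewrite (inj_eq ig) eq_sym.
have good := radon_good _ _ _ _ _ hK S g v _ ig HS Hnz Hin.
pose a := (ord_max : 'I_n.+1).
pose u i := if i == a then x else v i.
have [ga [[i0 gi0] Hg]] := dep_rel _ _ _ u (ltnSn n).
case: (eqVneq (ga a) 0) => ga0.
- have Hv : \sum_i ga i *: v i = 0.
    transitivity (\sum_i ga i *: u i); last exact: Hg.
    apply: eq_bigr => i _; rewrite /u; case: eqP => [->|//].
    by rewrite ga0 !scale0r.
  case: (boolP [exists i, 0 < ga i]) => [/existsP [i gi] | /existsPn Hn].
    by apply: (good ga Hv); [exists i | exists a; rewrite ga0].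
  apply: (good (fun i => - ga i)).
  + by under eq_bigr do rewrite scaleNr; rewrite sumrN Hv oppr0.
  + by exists i0; rewrite oppr_gt0 lt_neqAle gi0 leNgt Hn.
  + by exists a; rewrite ga0 oppr0.
- pose c i := if i == a then 0 else - ga i / ga a.
  have Hxc : x = \sum_i c i *: v i.
    move: Hg; rewrite (bigD1 a) //= /u eqxx => /eqP; rewrite addr_eq0 => /eqP e.
    rewrite (bigD1 a) //= /c eqxx scale0r add0r.
    transitivity ((ga a)^-1 *: (ga a *: x)); first by rewrite scalerA mulVf // scale1r.
    rewrite e scalerN -scaleNr scaler_sumr; apply: eq_bigr => i ia.
    rewrite (negbTE ia) scalerA; congr (_ *: _).
    by rewrite !mulNr mulrC.
  have [l [[j lj] Hl]] := dep_rel _ _ _ v (ltnSn n).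
  case: (rel_cases _ _ _ _ _ Hl (ex_intro _ j lj)) => [[l' [Hl' [Hp Hn]]] | [l' [Hl' Hpos]]].
    exact: (good l' Hl' Hp Hn).
  have [i Ki] := pos_case _ _ _ _ _ hK g v l' c x Kin Hpos Hl' Hxc.
  by case: (Hx i).
Qed.

Lemma all_k (R : realType) (n m : nat) (K : 'I_m -> set 'rV[R]_n)
  (hK : forall i, convex_cone (K i) /\ pointed (K i)) :
  (forall J : {set 'I_m}, #|J| = n ->
     [set x | forall j, j \in J -> K j x] <> [set 0]) ->
  (forall J : {set 'I_m}, #|J| = n.+1 ->
     [set x | exists2 j, j \in J & K j x] <> [set: 'rV[R]_n]) ->
  forall d (S : {set 'I_m}), #|S| = (n + d)%N ->
    exists w, w != 0 /\ forall j, j \in S -> K j w.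
Proof.
move=> hI hU d; elim: d => [|d IH] S HS.
  rewrite addn0 in HS.
  apply: contrapT => Hne; apply: (hI S HS).
  apply/funext => y; apply/propext; split => /=.
    move=> Hy; case: (eqVneq y 0) => // y0.
    by case: Hne; exists y.
  by move=> -> j _; exact: (proj1 (cone_basic _ _ _ (proj1 (hK j)))).
have [j0 j0S] : exists j0, j0 \in S.
  by apply/set0Pn; rewrite -card_gt0 HS addnS.
pose g (i : 'I_n.+1) := nth j0 (enum S) i.
have sz : forall i : 'I_n.+1, (i < size (enum S))%N.
  by move=> i; rewrite -cardE HS; apply: leq_trans (ltn_ord i) _; rewrite addnS ltnS leq_addr.
have ig : injective g.
  by move=> i k /eqP; rewrite /g nth_uniq ?sz ?enum_uniq // => /eqP /val_inj.
have HS' : forall i, g i \in S by move=> i; rewrite -mem_enum mem_nth ?sz.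
have : forall i, exists w, w != 0 /\ forall j, j \in S :\ g i -> K j w.
  move=> i; apply: IH; move: HS; rewrite (cardsD1 (g i)) HS' addnS add1n.
  by case.
case/fin_all_exists => v Hv.
pose J : {set 'I_m} := (g @: [set: 'I_n.+1])%SET.
have cJ : #|J| = n.+1 by rewrite /J card_imset // cardsT card_ord.
have : exists x, ~ [set x | exists2 j, j \in J & K j x] x.
  apply: contrapT => Hne; apply: (hU J cJ); apply/funext => y; apply/propext.
  split => // _; apply: contrapT => Hy; apply: Hne; by exists y.
case=> x Hx.
apply: (step _ _ _ _ hK S g v x ig HS').
- by move=> i; case: (Hv i).
- move=> i j jS jg; apply: (proj2 (Hv i)).
  by rewrite in_setD1 jg jS.
- move=> i Ki; apply: Hx; exists (g i) => //.
  by apply: imset_f; rewrite inE.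
Qed.

Theorem mainTheorem13 (R : realType) (n m : nat) (K : 'I_m -> set 'rV[R]_n) :
  (2 <= n)%N -> (n <= m)%N ->
  (forall i, convex_cone (K i) /\ pointed (K i) /\ nontrivial (K i)) ->
  (forall J : {set 'I_m}, #|J| = n ->
     [set x | forall j, j \in J -> K j x] <> [set 0]) ->
  (forall J : {set 'I_m}, #|J| = n.+1 ->
     [set x | exists2 j, j \in J & K j x] <> [set: 'rV[R]_n]) ->
  [set x | forall i, K i x] <> [set 0] /\
  [set x | exists i, K i x] <> [set: 'rV[R]_n].
Proof.
move=> n2 nm hK3 hI hU.
have hK : forall i, convex_cone (K i) /\ pointed (K i).
  by move=> i; case: (hK3 i) => [a [b _]].
have cT : #|[set: 'I_m]%SET| = (n + (m - n))%N by rewrite cardsT card_ord subnKC.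
have [w [w0 Hw]] := all_k _ _ _ _ hK hI hU (m - n) [set: 'I_m]%SET cT.
split.
- move=> E; have := congr1 (fun S : set _ => S w) E => /= h.
  have : w = 0 by rewrite -h => i; apply: Hw; rewrite inE.
  by move=> w00; rewrite w00 eqxx in w0.
- move=> E; have : [set x | exists i, K i x] (- w) by rewrite E.
  case=> i Ki; move: w0; apply/negP/negPn/eqP.
  apply: (pointed0 _ _ _ _ (proj2 (hK i))) => //.
  by apply: Hw; rewrite inE.
Qed.
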